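(* Let $\mathbb F$ be a field of odd characteristic or characteristic $0$, and let $\overline{\mathbb F}=\mathbb F[i]$ (equal to $\mathbb F$ if $-1$ is a square in $\mathbb F$). Let $A\subset\mathbb F^3$ be a finite set and $r\in\mathbb F$. For $a=(x,y,z)\in A$, let $l_r(a)$ be the line in $\mathbb P^3(\overline{\mathbb F})$ with Plücker vector $$[1:r-z:x-iy:r^2-\|a\|^2:-(r+z):x+iy],\qquad \|a\|:=x^2+y^2+z^2.$$ (i) Let $A'\subseteq A$ have at least two points. If the lines $l_r(a)$, $a\in A'$, all pass through a common point of $\mathbb P^3(\overline{\mathbb F})$, then all points of $A'$ lie on a single isotropic line in $\mathbb F^3$. The same conclusion holds if these lines all lie in a common plane of $\mathbb P^3(\overline{\mathbb F})$. (ii) Suppose $-1$ is not a square in $\mathbb F$, and let $r_1,r_2\in\mathbb F$ be distinct and nonzero. Then there do not exist two distinct points $a,a'\in A$ and two distinct points $b,b'\in A$ such that $l_{r_1}(a),l_{r_1}(a'),l_{r_2}(b),l_{r_2}(b')$ all pass through one common point of $\mathbb P^3(\overline{\mathbb F})$. Likewise, there do not exist such points for which these four lines all lie in one common plane.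
   Context: Plücker coordinates: a line through two distinct points $(x_0:\dots:x_3)$ and $(y_0:\dots:y_3)$ of $\mathbb P^3$ has Plücker vector $$[P_{01}:P_{02}:P_{03}:P_{23}:P_{31}:P_{12}]=[\boldsymbol\omega:\boldsymbol v],\qquad P_{ij}=x_iy_j-x_jy_i.$$ For a line not at infinity, $\boldsymbol\omega$ is its direction vector. A line in $\mathbb F^3$ is isotropic if its direction vector $\boldsymbol\omega$ satisfies $\boldsymbol\omega\cdot\boldsymbol\omega=0$. *)

(* Defs.v *)
From HB Require Import structures.
From mathcomp Require Import all_boot all_order all_algebra.
Set Implicit Arguments. Unset Strict Implicit. Unset Printing Implicit Defensive.
Import GRing.Theory.
Local Open Scope ring_scope.

Definition vec6 {L : nzRingType} (a b c d e g : L) : 'rV[L]_6 :=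
  \row_(k < 6) nth 0 [:: a; b; c; d; e; g] k.

Definition plucker {L : nzRingType} (x y : 'rV[L]_4) : 'rV[L]_6 :=
  let X k := x 0 (inord k) in let Y k := y 0 (inord k) in
  let P k l := X k * Y l - X l * Y k in
  vec6 (P 0 1)%N (P 0 2)%N (P 0 3)%N (P 2 3)%N (P 3 1)%N (P 1 2)%N.

Definition on_line {L : fieldType} (p : 'rV[L]_4) (w : 'rV[L]_6) : Prop :=
  exists (q : 'rV[L]_4) (c : L), c != 0 /\ plucker p q = c *: w.

Definition dot4 {L : nzRingType} (u p : 'rV[L]_4) : L := \sum_(k < 4) u 0 k * p 0 k.

Definition line_in_plane {L : fieldType} (u : 'rV[L]_4) (w : 'rV[L]_6) : Prop :=
  forall p, on_line p w -> dot4 u p = 0.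

Definition concurrent {L : fieldType} (ws : seq 'rV[L]_6) : Prop :=
  exists p : 'rV[L]_4, p != 0 /\ forall w, w \in ws -> on_line p w.

Definition coplanar {L : fieldType} (ws : seq 'rV[L]_6) : Prop :=
  exists u : 'rV[L]_4, u != 0 /\ forall w, w \in ws -> line_in_plane u w.

Definition dot3 {F : nzRingType} (u v : 'rV[F]_3) : F := \sum_(k < 3) u 0 k * v 0 k.

Definition nrm {F : nzRingType} (a : 'rV[F]_3) : F := dot3 a a.

(* The line l_r(a) in P^3(L), L = F[i] via f : F -> L:
   [1 : r-z : x-iy : r^2-||a|| : -(r+z) : x+iy]. *)
Definition lr {F L : fieldType} (f : {rmorphism F -> L}) (i : L) (r : F)
    (a : 'rV[F]_3) : 'rV[L]_6 :=
  let x := a 0 (inord 0) in let y := a 0 (inord 1) in let z := a 0 (inord 2) in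
  vec6 1 (f (r - z)) (f x - i * f y) (f (r ^+ 2 - nrm a)) (- f (r + z)) (f x + i * f y).

Definition on_isotropic_line {F : fieldType} (S : seq 'rV[F]_3) : Prop :=
  exists (p w : 'rV[F]_3), w != 0 /\ dot3 w w = 0 /\
    forall a, a \in S -> exists t : F, a = p + t *: w.

(* Main.v *)
Require Import Defs.
From HB Require Import structures.
From mathcomp Require Import all_boot all_order all_algebra.
From mathcomp Require Import ring.
Import GRing.Theory.
Local Open Scope ring_scope.

Lemma eq_by (R : fieldType) (k : R) {A B C : R} : C = 0 -> A - B = k * C -> A = B.
Proof. by move=> HC H; apply/eqP; rewrite -subr_eq0 H HC mulr0. Qed.

Lemma par3 (F : fieldType) (a1 a2 a3 b1 b2 b3 : F) :
  a2*b3 - a3*b2 = 0 -> a3*b1 - a1*b3 = 0 -> a1*b2 - a2*b1 = 0 ->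
  [|| b1 != 0, b2 != 0 | b3 != 0] ->
  exists l, [/\ a1 = l*b1, a2 = l*b2 & a3 = l*b3].
Proof.
move=> h1 h2 h3; case/or3P => hb.
- exists (a1 / b1); split.
  + by rewrite divfK.
  + apply: (mulIf hb); rewrite (_ : a1/b1*b2*b1 = a1*b2); last by field.
    by apply: (@eq_by F (-1) _ _ _ h3); ring.
  + apply: (mulIf hb); rewrite (_ : a1/b1*b3*b1 = a1*b3); last by field.
    by apply: (@eq_by F (1) _ _ _ h2); ring.
- exists (a2 / b2); split.
  + apply: (mulIf hb); rewrite (_ : a2/b2*b1*b2 = a2*b1); last by field.
    by apply: (@eq_by F (1) _ _ _ h3); ring.
  + by rewrite divfK.
  + apply: (mulIf hb); rewrite (_ : a2/b2*b3*b2 = a2*b3); last by field.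
    by apply: (@eq_by F (-1) _ _ _ h1); ring.
- exists (a3 / b3); split.
  + apply: (mulIf hb); rewrite (_ : a3/b3*b1*b3 = a3*b1); last by field.
    by apply: (@eq_by F (-1) _ _ _ h2); ring.
  + apply: (mulIf hb); rewrite (_ : a3/b3*b2*b3 = a3*b2); last by field.
    by apply: (@eq_by F (1) _ _ _ h1); ring.
  + by rewrite divfK.
Qed.

Lemma iso_par (F : fieldType) (u1 u2 u3 w1 w2 w3 : F) :
  [|| u1 != 0, u2 != 0 | u3 != 0] ->
  u1*u1 + u2*u2 + u3*u3 = 0 -> u1*w1 + u2*w2 + u3*w3 = 0 ->
  w1*w1 + w2*w2 + w3*w3 = 0 ->
  exists t, [/\ w1 = t*u1, w2 = t*u2 & w3 = t*u3].
Proof.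
move=> hu huu huw hww.
set x1 := u2*w3 - u3*w2; set x2 := u3*w1 - u1*w3; set x3 := u1*w2 - u2*w1.
have [x0|xn0] := boolP ([&& x1 == 0, x2 == 0 & x3 == 0]).
  case/and3P: x0 => /eqP e1 /eqP e2 /eqP e3.
  apply: par3 => //.
  - by apply: (@eq_by F (-1) _ _ _ e1); rewrite /x1; ring.
  - by apply: (@eq_by F (-1) _ _ _ e2); rewrite /x2; ring.
  - by apply: (@eq_by F (-1) _ _ _ e3); rewrite /x3; ring.
exfalso.
have xnz : [|| x1 != 0, x2 != 0 | x3 != 0].
  by move: xn0; rewrite -!negb_and.
have [l [el1 el2 el3]] : exists l, [/\ u1 = l*x1, u2 = l*x2 & u3 = l*x3].
  apply: par3 => //.
  - by apply: (@eq_by F 1 _ _ ((u1*w1 + u2*w2 + u3*w3) * u1 - (u1*u1 + u2*u2 + u3*u3) * w1)); [by rewrite huw huu !mul0r subrr | rewrite /x1 /x2 /x3; ring].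
  - by apply: (@eq_by F 1 _ _ ((u1*w1 + u2*w2 + u3*w3) * u2 - (u1*u1 + u2*u2 + u3*u3) * w2)); [by rewrite huw huu !mul0r subrr | rewrite /x1 /x2 /x3; ring].
  - by apply: (@eq_by F 1 _ _ ((u1*w1 + u2*w2 + u3*w3) * u3 - (u1*u1 + u2*u2 + u3*u3) * w3)); [by rewrite huw huu !mul0r subrr | rewrite /x1 /x2 /x3; ring].
have [m [em1 em2 em3]] : exists m, [/\ w1 = m*x1, w2 = m*x2 & w3 = m*x3].
  apply: par3 => //.
  - by apply: (@eq_by F 1 _ _ ((w1*w1 + w2*w2 + w3*w3) * u1 - (u1*w1 + u2*w2 + u3*w3) * w1)); [by rewrite huw hww !mul0r subrr | rewrite /x1 /x2 /x3; ring].
  - by apply: (@eq_by F 1 _ _ ((w1*w1 + w2*w2 + w3*w3) * u2 - (u1*w1 + u2*w2 + u3*w3) * w2)); [by rewrite huw hww !mul0r subrr | rewrite /x1 /x2 /x3; ring].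
  - by apply: (@eq_by F 1 _ _ ((w1*w1 + w2*w2 + w3*w3) * u3 - (u1*w1 + u2*w2 + u3*w3) * w3)); [by rewrite huw hww !mul0r subrr | rewrite /x1 /x2 /x3; ring].
have e1 : x1 = 0 by rewrite {1}/x1 el2 el3 em2 em3; ring.
have e2 : x2 = 0 by rewrite {1}/x2 el1 el3 em1 em3; ring.
have e3 : x3 = 0 by rewrite {1}/x3 el2 el1 em2 em1; ring.
by move: xnz; rewrite e1 e2 e3 eqxx.
Qed.
Definition row4 {L : nzRingType} (a b c d : L) : 'rV[L]_4 :=
  \row_(k < 4) nth 0 [:: a; b; c; d] k.

Lemma ord4_ind (P : 'I_4 -> Prop) : P (inord 0) -> P (inord 1) -> P (inord 2) -> P (inord 3) -> forall k, P k.
Proof.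
move=> h0 h1 h2 h3 k; rewrite -(inord_val k).
by case: k => [[|[|[|[|k]]]] Hk] //=.
Qed.

Lemma ord3_ind (P : 'I_3 -> Prop) : P (inord 0) -> P (inord 1) -> P (inord 2) -> forall k, P k.
Proof.
move=> h0 h1 h2 k; rewrite -(inord_val k).
by case: k => [[|[|[|k]]] Hk] //=.
Qed.

Lemma dot4E {L : fieldType} (u p : 'rV[L]_4) :
  dot4 u p = u 0 (inord 0) * p 0 (inord 0) + u 0 (inord 1) * p 0 (inord 1)
           + u 0 (inord 2) * p 0 (inord 2) + u 0 (inord 3) * p 0 (inord 3).
Proof.
rewrite /dot4 (eq_bigr (fun k : 'I_4 => u 0 (inord k) * p 0 (inord k))); last first.
  by move=> k _; rewrite inord_val.
rewrite -(big_mkord xpredT (fun k => u 0 (inord k) * p 0 (inord k))).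
by rewrite unlock /=; ring.
Qed.

Lemma dot3E {F : fieldType} (u p : 'rV[F]_3) :
  dot3 u p = u 0 (inord 0) * p 0 (inord 0) + u 0 (inord 1) * p 0 (inord 1)
           + u 0 (inord 2) * p 0 (inord 2).
Proof.
rewrite /dot3 (eq_bigr (fun k : 'I_3 => u 0 (inord k) * p 0 (inord k))); last first.
  by move=> k _; rewrite inord_val.
rewrite -(big_mkord xpredT (fun k => u 0 (inord k) * p 0 (inord k))).
by rewrite unlock /=; ring.
Qed.

Lemma row4E {L : nzRingType} (a b c d : L) :
  [/\ row4 a b c d 0 (inord 0) = a, row4 a b c d 0 (inord 1) = b,
      row4 a b c d 0 (inord 2) = c & row4 a b c d 0 (inord 3) = d].
Proof. by rewrite /row4 !mxE !inordK. Qed.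

Lemma on_line_eqs {L : fieldType} (p : 'rV[L]_4) b c d e g :
  on_line p (vec6 1 b c d e g) ->
  p 0 (inord 3) - p 0 (inord 1) * c = p 0 (inord 0) * e /\
  p 0 (inord 1) * b - p 0 (inord 2) = p 0 (inord 0) * g.
Proof.
case=> q [k [kn0 H]].
have H0 := congr1 (fun M : 'rV[L]_6 => M 0 (inord 0)) H.
have H1 := congr1 (fun M : 'rV[L]_6 => M 0 (inord 1)) H.
have H2 := congr1 (fun M : 'rV[L]_6 => M 0 (inord 2)) H.
have H4 := congr1 (fun M : 'rV[L]_6 => M 0 (inord 4)) H.
have H5 := congr1 (fun M : 'rV[L]_6 => M 0 (inord 5)) H.
rewrite /plucker /vec6 /= !mxE !inordK //= in H0 H1 H2 H4 H5.
set X0 := p 0 (inord 0) in H0 H1 H2 H4 H5 *.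
set X1 := p 0 (inord 1) in H0 H1 H2 H4 H5 *.
set X2 := p 0 (inord 2) in H0 H1 H2 H4 H5 *.
set X3 := p 0 (inord 3) in H0 H1 H2 H4 H5 *.
split; apply: (mulfI kn0).
  rewrite (_ : k * (X3 - X1*c) = X3*(k*1) - X1*(k*c)); last by ring.
  rewrite (_ : k*(X0*e) = X0*(k*e)); last by ring.
  by rewrite -H0 -H2 -H4; ring.
rewrite (_ : k * (X1*b - X2) = X1*(k*b) - X2*(k*1)); last by ring.
rewrite (_ : k*(X0*g) = X0*(k*g)); last by ring.
by rewrite -H0 -H1 -H5; ring.
Qed.

Lemma on_lineAB {L : fieldType} (b c d e g : L) : d + b*e + c*g = 0 ->
  on_line (row4 0 (-1) (-b) (-c)) (vec6 1 b c d e g) /\ on_line (row4 1 0 (-g) e) (vec6 1 b c d e g).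
Proof.
move=> hP.
have E : plucker (row4 0 (-1) (-b) (-c)) (row4 1 0 (-g) e) = vec6 1 b c d e g.
  apply/rowP => j; rewrite /plucker /vec6 /row4 !mxE !inordK //.
  case: j => [[|[|[|[|[|[|j]]]]]] Hj] //=; try ring.
  by rewrite -(subr0 d) -hP; ring.
split.
  by exists (row4 1 0 (-g) e), 1; rewrite oner_eq0 scale1r E.
exists (row4 0 (-1) (-b) (-c)), (-1); rewrite oppr_eq0 oner_eq0 -E.
split => //; apply/rowP => j; rewrite /plucker /vec6 !mxE.
by case: j => [[|[|[|[|[|[|j]]]]]] Hj] //=; ring.
Qed.


Lemma eq_by2 (R : fieldType) (k1 k2 : R) {A B L1 R1 L2 R2 : R} :
  L1 = R1 -> L2 = R2 -> A - B = k1*(L1 - R1) + k2*(L2 - R2) -> A = B.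
Proof. by move=> h1 h2 H; apply/eqP; rewrite -subr_eq0 H h1 h2 !subrr !mulr0 addr0. Qed.

Lemma det2 (F : fieldType) (al be ga de x y : F) :
  al*x + be*y = 0 -> ga*x - de*y = 0 -> (x != 0) || (y != 0) -> al*de + be*ga = 0.
Proof.
move=> h1 h2; case/orP => hn.
  apply: (mulIf hn); rewrite mul0r.
  by apply: (@eq_by2 F de be _ _ _ _ _ _ h1 h2); ring.
apply: (mulIf hn); rewrite mul0r.
by apply: (@eq_by2 F ga (-al) _ _ _ _ _ _ h1 h2); ring.
Qed.

Lemma meet_conc {L : fieldType} (p : 'rV[L]_4) b c d e g b' c' d' e' g' :
  p != 0 -> on_line p (vec6 1 b c d e g) -> on_line p (vec6 1 b' c' d' e' g') ->
  (c - c')*(g - g') + (e - e')*(b - b') = 0.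
Proof.
move=> hp /on_line_eqs [h1 h2] /on_line_eqs [h1' h2'].
apply: (@det2 L _ _ _ _ (p 0 (inord 1)) (p 0 (inord 0))).
- by apply: (@eq_by2 L (-1) 1 _ _ _ _ _ _ h1 h1'); ring.
- by apply: (@eq_by2 L 1 (-1) _ _ _ _ _ _ h2 h2'); ring.
case: (eqVneq (p 0 (inord 1)) 0) => [e1|hh]; last by apply/orP; left. case: (eqVneq (p 0 (inord 0)) 0) => [e0|hh]; last by apply/orP; right.
exfalso; move/eqP: hp; apply; apply/rowP; elim/ord4_ind; rewrite mxE //.
  by move: h2; rewrite e1 e0 !mul0r sub0r => /eqP; rewrite oppr_eq0 => /eqP.
by move: h1; rewrite e1 e0 !mul0r subr0.
Qed.

Lemma meet_plane {L : fieldType} (u : 'rV[L]_4) b c d e g b' c' d' e' g' :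
  u != 0 -> d + b*e + c*g = 0 -> d' + b'*e' + c'*g' = 0 ->
  line_in_plane u (vec6 1 b c d e g) -> line_in_plane u (vec6 1 b' c' d' e' g') ->
  (c - c')*(g - g') + (e - e')*(b - b') = 0.
Proof.
move=> hu hP hP' hl hl'.
have [oA oB] := on_lineAB _ _ _ _ _ hP; have [oA' oB'] := on_lineAB _ _ _ _ _ hP'.
have eA := hl _ oA; have eB := hl _ oB; have eA' := hl' _ oA'; have eB' := hl' _ oB'.
rewrite !dot4E /row4 !mxE !inordK //= in eA eB eA' eB'.
rewrite [X in _ + X]mulrC.
apply: (@det2 L _ _ _ _ (u 0 (inord 3)) (u 0 (inord 2))).
- by apply: (@eq_by2 L (-1) 1 _ _ _ _ _ _ eA eA'); ring.
- by apply: (@eq_by2 L 1 (-1) _ _ _ _ _ _ eB eB'); ring.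
case: (eqVneq (u 0 (inord 3)) 0) => [e3|hh]; last by apply/orP; left.
case: (eqVneq (u 0 (inord 2)) 0) => [e2|hh]; last by apply/orP; right.
exfalso; move/eqP: hu; apply; apply/rowP; elim/ord4_ind; rewrite mxE //.
  by move: eB; rewrite e2 e3 !mul0r !mulr0 !addr0 mulr1.
by move: eA; rewrite e2 e3 !mul0r !mulr0 !addr0 add0r mulrN1 => /eqP; rewrite oppr_eq0 => /eqP.
Qed.

Lemma eq_by1 (R : fieldType) (k : R) {A B L1 R1 : R} :
  L1 = R1 -> A - B = k*(L1 - R1) -> A = B.
Proof. by move=> h1 H; apply/eqP; rewrite -subr_eq0 H h1 subrr mulr0. Qed.

Section LR.
Variables (F L : fieldType) (f : {rmorphism F -> L}) (i : L).
Hypothesis hi : i ^+ 2 = -1.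

Lemma lr_pl (r : F) (a : 'rV[F]_3) :
  f (r ^+ 2 - nrm a) + f (r - a 0 (inord 2)) * (- f (r + a 0 (inord 2)))
  + (f (a 0 (inord 0)) - i * f (a 0 (inord 1))) * (f (a 0 (inord 0)) + i * f (a 0 (inord 1))) = 0.
Proof.
rewrite /nrm dot3E !(rmorphB, rmorphD, rmorphM, rmorphXn).
by apply: (@eq_by1 L (- f (a 0 (inord 1)) ^+ 2) _ _ _ _ hi); ring.
Qed.

Lemma lr_meet (r r' : F) (a b : 'rV[F]_3) :
  (exists p, p != 0 /\ on_line p (lr f i r a) /\ on_line p (lr f i r' b)) \/
  (exists u, u != 0 /\ line_in_plane u (lr f i r a) /\ line_in_plane u (lr f i r' b)) ->
  (a 0 (inord 0) - b 0 (inord 0)) ^+ 2 + (a 0 (inord 1) - b 0 (inord 1)) ^+ 2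
  + (a 0 (inord 2) - b 0 (inord 2)) ^+ 2 = (r - r') ^+ 2.
Proof.
move=> H.
have D : (f (a 0 (inord 0)) - i * f (a 0 (inord 1)) - (f (b 0 (inord 0)) - i * f (b 0 (inord 1))))
          * (f (a 0 (inord 0)) + i * f (a 0 (inord 1)) - (f (b 0 (inord 0)) + i * f (b 0 (inord 1))))
       + (- f (r + a 0 (inord 2)) - - f (r' + b 0 (inord 2))) * (f (r - a 0 (inord 2)) - f (r' - b 0 (inord 2))) = 0.
  case: H => [[p [hp [h1 h2]]] | [u [hu [h1 h2]]]].
    by move: h1 h2; rewrite /lr /=; apply: meet_conc.
  by move: h1 h2; rewrite /lr /=; apply: meet_plane => //; [apply: lr_pl | apply: lr_pl].
apply/eqP; rewrite -subr_eq0 -(fmorph_eq0 f); apply/eqP; rewrite -[RHS]D.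
rewrite !(rmorphB, rmorphD, rmorphM, rmorphXn).
by apply: (@eq_by1 L ((f (a 0 (inord 1)) - f (b 0 (inord 1))) ^+ 2) _ _ _ _ hi); ring.
Qed.

End LR.

Lemma eq_by4 (R : fieldType) (k1 k2 k3 k4 : R) {A B L1 R1 L2 R2 L3 R3 L4 R4 : R} :
  L1 = R1 -> L2 = R2 -> L3 = R3 -> L4 = R4 ->
  A - B = k1*(L1 - R1) + k2*(L2 - R2) + k3*(L3 - R3) + k4*(L4 - R4) -> A = B.
Proof.
by move=> h1 h2 h3 h4 H; apply/eqP; rewrite -subr_eq0 H h1 h2 h3 h4 !subrr !mulr0 !addr0.
Qed.

Lemma core2 (F : fieldType) (u1 u2 u3 c1 c2 c3 e : F) :
  [|| u1 != 0, u2 != 0 | u3 != 0] ->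
  u1*u1 + u2*u2 + u3*u3 = 0 -> u1*c1 + u2*c2 + u3*c3 = 0 ->
  c1*c1 + c2*c2 + c3*c3 = e ^+ 2 -> e != 0 -> exists s : F, s ^+ 2 = -1.
Proof.
move=> hu huu huc hcc he.
have hux : u1*(u2*c3 - u3*c2) + u2*(u3*c1 - u1*c3) + u3*(u1*c2 - u2*c1) = 0 by ring.
have hxx : (u2*c3 - u3*c2)*(u2*c3 - u3*c2) + (u3*c1 - u1*c3)*(u3*c1 - u1*c3) + (u1*c2 - u2*c1)*(u1*c2 - u2*c1) = 0.
  by apply: (@eq_by2 F (c1*c1 + c2*c2 + c3*c3) (-(u1*c1 + u2*c2 + u3*c3)) _ _ _ _ _ _ huu huc); ring.
have [t [ex1 ex2 ex3]] := @iso_par F _ _ _ _ _ _ hu huu hux hxx.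
have k : forall uk, uk \in [:: u1; u2; u3] -> (c1*c1 + c2*c2 + c3*c3 + t^+2) * uk = 0.
  move=> uk; rewrite !inE => /or3P [] /eqP ->.
  - by apply: (@eq_by4 F c2 (-c3) (-t) c1 _ _ _ _ _ _ _ _ _ _ ex3 ex2 ex1 huc); ring.
  - by apply: (@eq_by4 F c3 (-c1) (-t) c2 _ _ _ _ _ _ _ _ _ _ ex1 ex3 ex2 huc); ring.
  - by apply: (@eq_by4 F c1 (-c2) (-t) c3 _ _ _ _ _ _ _ _ _ _ ex2 ex1 ex3 huc); ring.
have ht : e ^+ 2 + t ^+ 2 = 0.
  rewrite -hcc; case/or3P: hu => hk.
  - by apply: (mulIf hk); rewrite mul0r; apply: k; rewrite !inE eqxx.
  - by apply: (mulIf hk); rewrite mul0r; apply: k; rewrite !inE eqxx orbT.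
  - by apply: (mulIf hk); rewrite mul0r; apply: k; rewrite !inE eqxx !orbT.
have tn0 : t != 0.
  apply/eqP => t0; move: ht; rewrite t0 expr0n /= addr0 => /eqP.
  by rewrite expf_eq0 /= (negbTE he).
exists (e / t); rewrite expr_div_n.
have -> : e ^+ 2 = - t ^+ 2 by apply/eqP; rewrite -subr_eq0 opprK ht.
by rewrite mulNr divff // expf_neq0.
Qed.

Lemma part2_scalar (F : fieldType) (h2 : (2:F) != 0) (a1 a2 a3 a'1 a'2 a'3 b1 b2 b3 e : F) :
  e != 0 -> [|| a'1 - a1 != 0, a'2 - a2 != 0 | a'3 - a3 != 0] ->
  (a1 - a'1) ^+ 2 + (a2 - a'2) ^+ 2 + (a3 - a'3) ^+ 2 = 0 ->
  (a1 - b1) ^+ 2 + (a2 - b2) ^+ 2 + (a3 - b3) ^+ 2 = e ^+ 2 ->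
  (a'1 - b1) ^+ 2 + (a'2 - b2) ^+ 2 + (a'3 - b3) ^+ 2 = e ^+ 2 ->
  exists s : F, s ^+ 2 = -1.
Proof.
move=> he hu q1 q2 q3.
apply: (@core2 F _ _ _ (a1 - b1) (a2 - b2) (a3 - b3) e hu _ _ _ he).
- by apply: (@eq_by1 F 1 _ _ _ _ q1); ring.
- apply: (mulIf h2); rewrite mul0r.
  by apply: (@eq_by4 F 1 (-1) (-1) 0 _ _ _ _ _ _ _ _ _ _ q3 q2 q1 q1); ring.
- by apply: (@eq_by1 F 1 _ _ _ _ q2); ring.
Qed.


Lemma part1_scalar (F : fieldType) (h2 : (2:F) != 0) (p1 p2 p3 q1 q2 q3 a1 a2 a3 : F) :
  [|| q1 - p1 != 0, q2 - p2 != 0 | q3 - p3 != 0] ->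
  (q1 - p1) ^+ 2 + (q2 - p2) ^+ 2 + (q3 - p3) ^+ 2 = 0 ->
  (a1 - p1) ^+ 2 + (a2 - p2) ^+ 2 + (a3 - p3) ^+ 2 = 0 ->
  (a1 - q1) ^+ 2 + (a2 - q2) ^+ 2 + (a3 - q3) ^+ 2 = 0 ->
  exists t, [/\ a1 = p1 + t * (q1 - p1), a2 = p2 + t * (q2 - p2) & a3 = p3 + t * (q3 - p3)].
Proof.
move=> hu e1 e2 e3.
have huu : (q1-p1)*(q1-p1) + (q2-p2)*(q2-p2) + (q3-p3)*(q3-p3) = 0.
  by apply: (@eq_by1 F 1 _ _ _ _ e1); ring.
have hww : (a1-p1)*(a1-p1) + (a2-p2)*(a2-p2) + (a3-p3)*(a3-p3) = 0.
  by apply: (@eq_by1 F 1 _ _ _ _ e2); ring.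
have huw : (q1-p1)*(a1-p1) + (q2-p2)*(a2-p2) + (q3-p3)*(a3-p3) = 0.
  apply: (mulIf h2); rewrite mul0r.
  by apply: (@eq_by4 F 1 1 (-1) 0 _ _ _ _ _ _ _ _ _ _ e1 e2 e3 e3); ring.
have [t [t1 t2 t3]] := @iso_par F _ _ _ _ _ _ hu huu huw hww.
by exists t; split; [rewrite -t1 | rewrite -t2 | rewrite -t3]; ring.
Qed.

Definition Q {F : fieldType} (a b : 'rV[F]_3) : F :=
  (a 0 (inord 0) - b 0 (inord 0)) ^+ 2 + (a 0 (inord 1) - b 0 (inord 1)) ^+ 2
  + (a 0 (inord 2) - b 0 (inord 2)) ^+ 2.

Lemma two_neq0 (F : fieldType) : ~~ (2%N \in [pchar F]) -> (2%:R : F) != 0.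
Proof. by rewrite inE. Qed.

Lemma neq_comp {F : fieldType} (a b : 'rV[F]_3) : a != b ->
  [|| b 0 (inord 0) - a 0 (inord 0) != 0, b 0 (inord 1) - a 0 (inord 1) != 0
    | b 0 (inord 2) - a 0 (inord 2) != 0].
Proof.
move=> hab.
case: (eqVneq (b 0 (inord 0) - a 0 (inord 0)) 0) => [e0|h]; last by apply/or3P; constructor 1.
case: (eqVneq (b 0 (inord 1) - a 0 (inord 1)) 0) => [e1|h]; last by apply/or3P; constructor 2.
case: (eqVneq (b 0 (inord 2) - a 0 (inord 2)) 0) => [e2|h]; last by apply/or3P; constructor 3.
exfalso; move/eqP: hab; apply; apply/rowP; elim/ord3_ind; apply/esym/subr0_eq => //.
Qed.

Lemma part1_vec (F : fieldType) (h2 : (2%:R : F) != 0) (A' : seq 'rV[F]_3) a0 a1 :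
  (forall a b, a \in A' -> b \in A' -> Q a b = 0) -> a0 \in A' -> a1 \in A' -> a0 != a1 ->
  on_isotropic_line A'.
Proof.
move=> HQ h0 h1 hne.
have hu := neq_comp a0 a1 hne.
exists a0, (a1 - a0); split; [|split].
- by apply: contraTneq hu => /subr0_eq ->; rewrite !subrr eqxx.
- rewrite dot3E !mxE; have := HQ _ _ h1 h0; rewrite /Q => e.
  by apply: (@eq_by1 F 1 _ _ _ _ e); ring.
move=> a ha.
have [t [t1 t2 t3]] := @part1_scalar F h2 _ _ _ _ _ _ _ _ _ hu (HQ _ _ h1 h0) (HQ _ _ ha h0) (HQ _ _ ha h1).
exists t; apply/rowP; elim/ord3_ind; rewrite !mxE //.
Qed.

Definition meet {L : fieldType} (w w' : 'rV[L]_6) :=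
  (exists p, p != 0 /\ on_line p w /\ on_line p w') \/
  (exists u, u != 0 /\ line_in_plane u w /\ line_in_plane u w').

Lemma part2_core (F L : fieldType) (f : {rmorphism F -> L}) (i : L)
   (hi : i ^+ 2 = -1) (h2 : (2%:R : F) != 0) (ns : ~ (exists s : F, s ^+ 2 = -1))
   (r1 r2 : F) (a a' b : 'rV[F]_3) : r1 != r2 -> a != a' ->
   meet (lr f i r1 a) (lr f i r1 a') -> meet (lr f i r1 a) (lr f i r2 b) ->
   meet (lr f i r1 a') (lr f i r2 b) -> False.
Proof.
move=> hr haa m1 m2 m3.
apply: ns.
have q1 := @lr_meet F L f i hi _ _ _ _ m1; have q2 := @lr_meet F L f i hi _ _ _ _ m2; have q3 := @lr_meet F L f i hi _ _ _ _ m3.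
rewrite subrr expr0n /= in q1.
apply: (@part2_scalar F h2 _ _ _ _ _ _ _ _ _ (r1 - r2) _ (neq_comp a a' haa) q1 q2 q3).
by rewrite subr_eq0.
Qed.

Theorem mainTheorem7 (F L : fieldType) (f : {rmorphism F -> L}) (i : L)
    (hchar : ~~ (2%N \in [pchar F]))
    (hi : i ^+ 2 = -1)
    (hgen : forall z : L, exists a b : F, z = f a + f b * i)
    (A : seq 'rV[F]_3) :
  (forall (r : F) (A' : seq 'rV[F]_3), {subset A' <= A} -> (2 <= size (undup A'))%N ->
     (concurrent [seq lr f i r a | a <- A'] -> on_isotropic_line A') /\
     (coplanar [seq lr f i r a | a <- A'] -> on_isotropic_line A')) /\
  (~ (exists s : F, s ^+ 2 = -1) ->
   forall r1 r2 : F, r1 != r2 -> r1 != 0 -> r2 != 0 ->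
     ~ (exists a a' b b' : 'rV[F]_3,
          [/\ a \in A, a' \in A, b \in A & b' \in A] /\ a != a' /\ b != b' /\
          concurrent [:: lr f i r1 a; lr f i r1 a'; lr f i r2 b; lr f i r2 b']) /\
     ~ (exists a a' b b' : 'rV[F]_3,
          [/\ a \in A, a' \in A, b \in A & b' \in A] /\ a != a' /\ b != b' /\
          coplanar [:: lr f i r1 a; lr f i r1 a'; lr f i r2 b; lr f i r2 b'])).
Proof.
have h2 := @two_neq0 F hchar.
split.
  move=> r A' _ hsz.
  have [a0 [a1 [h0 h1 hne]]] : exists a0 a1, [/\ a0 \in A', a1 \in A' & a0 != a1].
    have U := undup_uniq A'.
    move: hsz U; case E: (undup A') => [|x [|y s]]; [by [] | by [] | ].
    rewrite cons_uniq => _ /andP [hx _].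
    move: hx; rewrite in_cons negb_or => /andP [hxy _].
    exists x, y; split => //.
      by rewrite -mem_undup E mem_head.
    by rewrite -mem_undup E in_cons mem_head orbT.
  have key : forall a b, a \in A' -> b \in A' -> meet (lr f i r a) (lr f i r b) -> Q a b = 0.
    move=> a b ha hb m; have := @lr_meet F L f i hi _ _ _ _ m; rewrite /Q => ->.
    by rewrite subrr expr0n.
  split => [[p [hp Hp]] | [u [hu Hu]]];
    apply: (@part1_vec F h2 A' a0 a1 _ h0 h1 hne) => a b ha hb; apply: key => //.
    by left; exists p; split => //; split; apply: Hp; apply: map_f.
  by right; exists u; split => //; split; apply: Hu; apply: map_f.
move=> ns r1 r2 hr _ _; split.
  move=> [a [a' [b [b' [_ [haa [_ [p [hp Hp]]]]]]]]].
  have Hm : forall w w', w \in [:: lr f i r1 a; lr f i r1 a'; lr f i r2 b; lr f i r2 b'] ->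
      w' \in [:: lr f i r1 a; lr f i r1 a'; lr f i r2 b; lr f i r2 b'] -> meet w w'.
    by move=> w w' hw hw'; left; exists p; split => //; split; apply: Hp.
  by apply: (@part2_core F L f i hi h2 ns r1 r2 a a' b hr haa); apply: Hm; rewrite !inE eqxx ?orbT.
move=> [a [a' [b [b' [_ [haa [_ [u [hu Hu]]]]]]]]].
have Hm : forall w w', w \in [:: lr f i r1 a; lr f i r1 a'; lr f i r2 b; lr f i r2 b'] ->
    w' \in [:: lr f i r1 a; lr f i r1 a'; lr f i r2 b; lr f i r2 b'] -> meet w w'.
  by move=> w w' hw hw'; right; exists u; split => //; split; apply: Hu.
by apply: (@part2_core F L f i hi h2 ns r1 r2 a a' b hr haa); apply: Hm; rewrite !inE eqxx ?orbT.
Qed.
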